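(* For $i\in\{1,2\}$ let $\mathcal{R}_i=(X_i,\Phi_i,\check X_i,\check\Phi_i)$ be a semisimple root datum, $\mathcal{T}_i=(T_i,\emptyset,\check T_i,\emptyset)$ a torus, $A_i$ a finite $\mathbb{Z}$-module with surjections $h_i:X_i\to A_i$ (with $\Phi_i\subseteq\ker h_i$) and $f_i:T_i\to A_i$, and let $\mathcal{R}_i'=\mathcal{R}_i\oplus_{(A_i,h_i,f_i)}\mathcal{T}_i=(B_i,\Phi_i',\check B_i,\check\Phi_i')$. If $\zeta:\mathcal{R}_1'\to\mathcal{R}_2'$ is a $p$-morphism (with $\zeta:B_1\to B_2$), then there exist $p$-morphisms $\zeta_1:\mathcal{R}_1\to\mathcal{R}_2$ (with $\zeta_1:X_1\to X_2$) and $\zeta_2:\mathcal{T}_1\to\mathcal{T}_2$ (with $\zeta_2:T_1\to T_2$) and a group homomorphism $\zeta_3:A_1\to A_2$ such that (a) $\zeta=(\zeta_1\oplus\zeta_2)|_{B_1}$; (b) $\zeta_3\circ h_1=h_2\circ\zeta_1$; (c) $\zeta_3\circ f_1=f_2\circ\zeta_2$. In particular $\zeta_1(\ker h_1)\subseteq\ker h_2$. If $\zeta$ is an isomorphism then so are $\zeta_1,\zeta_2,\zeta_3$, and $\zeta_1(\ker h_1)=\ker h_2$.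
   Context: Root data are reduced quadruples $(X,\Phi,\check X,\check\Phi)$ with perfect pairing; torus = no roots; semisimple means $\mathbb{Q}\Phi=\mathbb{Q}\otimes X$. Fix $p\ge0$ (a prime or $0$). Here a $p$-morphism written $\mathcal{R}\to\mathcal{R}'$ with $\mathcal{R}=(X,\Phi,\dots)$, $\mathcal{R}'=(X',\Phi',\dots)$ means a $\mathbb{Z}$-linear map $g:X\to X'$ together with a function $q:\Phi'\to\{p^n:n\ge0\}$ ($q\equiv1$ if $p=0$) and a bijection $\tau:\Phi'\to\Phi$ with $g(\tau(\alpha))=q(\alpha)\alpha$ and $\check g(\check\alpha)=q(\alpha)\tau(\alpha)^\vee$ for all $\alpha\in\Phi'$, where $\check g:\check X'\to\check X$ is the transpose. Central product $\mathcal{R}\oplus_{(A,h,f)}\mathcal{T}$: the root datum induced from the direct sum $\mathcal{R}\oplus\mathcal{T}$ by the submodule $X\oplus_A T=\{(x,t)\in X\oplus T: h(x)=f(t)\}$, i.e. with lattice $X\oplus_A T$, roots $\{(\alpha,0):\alpha\in\Phi\}$, dual lattice $\mathrm{Hom}(X\oplus_A T,\mathbb{Z})$ and coroots the restrictions of $(\check\alpha,0)$. *)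

(* Defs.v *)
From HB Require Import structures.
From mathcomp Require Import all_boot all_order all_algebra.
Set Implicit Arguments. Unset Strict Implicit. Unset Printing Implicit Defensive.
Import Order.TTheory GRing.Theory Num.Theory.
Local Open Scope ring_scope.

(* A (pre-)root datum, living inside an ambient Z-module V (in practice a
   subgroup of some Z^k, hence free of finite rank):
   - rd_lat   : the lattice X, as a subgroup of V;
   - rd_roots : the finite set of roots Phi (duplicate-free list);
   - rd_cor   : rd_cor a x = <x, a^vee>, the coroot of the root a, as an
                element of Hom(X, Z) (only its values on X matter).
   The dual lattice is taken to be Hom(X,Z) itself (perfect pairing). *)
Record rdatum (V : zmodType) := RD {
  rd_lat : pred V;
  rd_roots : seq V;
  rd_cor : V -> V -> int }.

Section RD.
Variables (V : zmodType).

Definition is_root_datum (R : rdatum V) : Prop :=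
  let L := rd_lat R in let Phi := rd_roots R in let c := rd_cor R in
  [/\ (0 \in L) /\ (forall x y, x \in L -> y \in L -> x - y \in L),
      uniq Phi /\ {subset Phi <= L},
      (forall a, a \in Phi -> forall x y, x \in L -> y \in L ->
           c a (x - y) = c a x - c a y)
      /\ (forall a, a \in Phi -> c a a = 2),
      (forall a b, a \in Phi -> b \in Phi -> b - a *~ c a b \in Phi)
      (* dual reflections preserve the coroots *)
      /\ (forall a b, a \in Phi -> b \in Phi -> exists2 g, g \in Phi &
             forall x, x \in L -> c g x = c b x - c b a * c a x) &
      (forall a b, a \in Phi -> b \in Phi ->
          (forall x, x \in L -> c a x = c b x) -> a = b) ].

Definition reduced_rd (R : rdatum V) : Prop :=
  forall a, a \in rd_roots R -> a *+ 2 \notin rd_roots R.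

(* Q Phi = Q (x) X *)
Definition semisimple_rd (R : rdatum V) : Prop :=
  forall x, x \in rd_lat R -> exists k : nat, (0 < k)%N /\
    exists cf : V -> int, x *+ k = \sum_(a <- rd_roots R) a *~ cf a.

Definition torus_rd (R : rdatum V) : Prop := rd_roots R = [::].

Definition full_lattice (R : rdatum V) : Prop := forall x, x \in rd_lat R.
End RD.

Definition cprod (V W : zmodType) (A : zmodType) (R : rdatum V) (T : rdatum W)
   (h : V -> A) (f : W -> A) : rdatum (V * W)%type :=
  @RD (V * W)%type
    [pred b : (V * W)%type | [&& b.1 \in rd_lat R, b.2 \in rd_lat T & h b.1 == f b.2]]
    (map (fun a => (a, 0)) (rd_roots R))
    (fun b y => rd_cor R b.1 y.1).

Definition ppow (p q : nat) : Prop :=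
  if p == 0%N then q = 1%N else exists e, q = (p ^ e)%N.

Definition p_morphism (p : nat) (V V' : zmodType) (R : rdatum V) (R' : rdatum V')
   (g : V -> V') (q : V' -> nat) (tau : V' -> V) : Prop :=
  let L := rd_lat R in let L' := rd_lat R' in
  let Phi := rd_roots R in let Phi' := rd_roots R' in
  (forall x y, x \in L -> y \in L -> g (x - y) = g x - g y) /\
  (forall x, x \in L -> g x \in L') /\
  (forall a, a \in Phi' -> ppow p (q a)) /\
  (forall a, a \in Phi' -> tau a \in Phi) /\
  (forall a b, a \in Phi' -> b \in Phi' -> tau a = tau b -> a = b) /\
  (forall b, b \in Phi -> exists2 a, a \in Phi' & tau a = b) /\
  (forall a, a \in Phi' -> g (tau a) = a *+ q a) /\
  (forall a, a \in Phi' -> forall x, x \in L ->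
      rd_cor R' a (g x) = rd_cor R (tau a) x *+ q a).

Definition p_iso (p : nat) (V V' : zmodType) (R : rdatum V) (R' : rdatum V')
   (g : V -> V') (q : V' -> nat) (tau : V' -> V) : Prop :=
  p_morphism p R R' g q tau /\
  (forall x y, x \in rd_lat R -> y \in rd_lat R -> g x = g y -> x = y) /\
  (forall y, y \in rd_lat R' -> exists2 x, x \in rd_lat R & g x = y) /\
  (forall a, a \in rd_roots R' -> q a = 1%N).

(* Main.v *)
Require Import Defs.
From HB Require Import structures.
From mathcomp Require Import all_boot all_order all_algebra ring.
Import GRing.Theory.
Local Open Scope ring_scope.

Module LibM.
Import Order.TTheory GRing.Theory Num.Theory.
Set Implicit Arguments. Unset Strict Implicit.

Section Add.
Variables (U W : zmodType) (B : pred U) (f : U -> W).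
Hypothesis B0 : 0 \in B.
Hypothesis BB : forall {x y}, x \in B -> y \in B -> x - y \in B.
Hypothesis fB : forall {x y}, x \in B -> y \in B -> f (x - y) = f x - f y.

Lemma f0 : f 0 = 0.
Proof. by have := fB B0 B0; rewrite subrr => ->; rewrite subrr. Qed.
Lemma BN x : x \in B -> - x \in B.
Proof. by move=> h; rewrite -sub0r BB. Qed.
Lemma BD x y : x \in B -> y \in B -> x + y \in B.
Proof. by move=> hx hy; rewrite -(opprK y) BB // BN. Qed.
Lemma fN x : x \in B -> f (- x) = - f x.
Proof. by move=> h; rewrite -sub0r fB // f0 sub0r. Qed.
Lemma fD x y : x \in B -> y \in B -> f (x + y) = f x + f y.
Proof.
move=> hx hy; have := @fB x (- y) hx (BN hy).
by rewrite opprK => ->; rewrite fN // opprK.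
Qed.
Lemma BMn x n : x \in B -> x *+ n \in B.
Proof. by move=> h; elim: n => [|n IH]; rewrite ?mulr0n // mulrS BD. Qed.
Lemma fMn x n : x \in B -> f (x *+ n) = f x *+ n.
Proof. by move=> h; elim: n => [|n IH]; rewrite ?mulr0n ?f0 // !mulrS fD ?BMn // IH. Qed.
Lemma BMz x k : x \in B -> x *~ k \in B.
Proof. by move=> h; case: k => n; [exact: BMn | rewrite NegzE mulrNz BN // BMn]. Qed.
Lemma fMz x k : x \in B -> f (x *~ k) = f x *~ k.
Proof.
move=> h; case: k => n; first exact: fMn.
by rewrite NegzE !mulrNz fN ?BMn // fMn.
Qed.
Lemma Bsum (I : eqType) (s : seq I) (F : I -> U) :
  (forall i, i \in s -> F i \in B) -> \sum_(i <- s) F i \in B.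
Proof.
elim: s => [|a s IH] h; rewrite ?big_nil // big_cons BD ?h ?mem_head //.
by apply: IH => i hi; rewrite h // in_cons hi orbT.
Qed.
Lemma fsum (I : eqType) (s : seq I) (F : I -> U) :
  (forall i, i \in s -> F i \in B) -> f (\sum_(i <- s) F i) = \sum_(i <- s) f (F i).
Proof.
elim: s => [|a s IH] h; rewrite ?big_nil ?f0 // !big_cons fD ?h ?mem_head //.
  by rewrite IH // => i hi; rewrite h // in_cons hi orbT.
by apply: Bsum => i hi; rewrite h // in_cons hi orbT.
Qed.
End Add.
Lemma sub_of_add (U W : zmodType) (f : U -> W) :
  (forall x y, f (x + y) = f x + f y) -> forall x y, f (x - y) = f x - f y.
Proof. by move=> h x y; apply/eqP; rewrite eq_sym subr_eq -h subrK. Qed.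
Section Hard.
Variables (n : nat) (R : rdatum 'rV[int]_n).
Hypothesis hR : is_root_datum R.
Hypothesis hfull : full_lattice R.
Hypothesis hss : semisimple_rd R.
Local Notation V := 'rV[int]_n.
Local Notation Phi := (rd_roots R).
Local Notation c := (rd_cor R).

Lemma cB a : a \in Phi -> forall x y, c a (x - y) = c a x - c a y.
Proof. by case: hR => _ _ [h _] _ _ ha x y; apply: h. Qed.
Lemma caa a : a \in Phi -> c a a = 2.
Proof. by case: hR => _ _ [_ h] _ _; apply: h. Qed.
Lemma uPhi : uniq Phi.
Proof. by case: hR => _ [] . Qed.
Lemma reflP a b : a \in Phi -> b \in Phi -> b - a *~ c a b \in Phi.
Proof. by case: hR => _ _ _ [h _] _; apply: h. Qed.

Lemma addB0 (U W : zmodType) (f : U -> W) :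
  (forall x y, f (x - y) = f x - f y) -> f 0 = 0.
Proof. by move=> h; have h0 := h 0 0; rewrite subr0 subrr in h0. Qed.
Lemma addBN (U W : zmodType) (f : U -> W) :
  (forall x y, f (x - y) = f x - f y) -> forall x, f (- x) = - f x.
Proof. by move=> h x; rewrite -sub0r h addB0 // sub0r. Qed.
Lemma addBD (U W : zmodType) (f : U -> W) :
  (forall x y, f (x - y) = f x - f y) -> forall x y, f (x + y) = f x + f y.
Proof. by move=> h x y; have := h x (- y); rewrite opprK => ->; rewrite (addBN h) opprK. Qed.
Lemma addBMz (U W : zmodType) (f : U -> W) :
  (forall x y, f (x - y) = f x - f y) -> forall x k, f (x *~ k) = f x *~ k.
Proof.
move=> h x k; have hMn m : f (x *+ m) = f x *+ m.
  by elim: m => [|m IH]; rewrite ?mulr0n ?addB0 // !mulrS addBD // IH.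
by case: k => m; [exact: hMn | rewrite NegzE !mulrNz addBN // hMn].
Qed.
Lemma addBsum (U W : zmodType) (f : U -> W) (I : Type) (s : seq I) (F : I -> U) :
  (forall x y, f (x - y) = f x - f y) -> f (\sum_(i <- s) F i) = \sum_(i <- s) f (F i).
Proof.
move=> h; elim: s => [|a s IH]; rewrite ?big_nil ?addB0 // !big_cons addBD //.
by rewrite IH.
Qed.

Definition sr a b := b - a *~ c a b.

Lemma c_sr a v : a \in Phi -> c a (sr a v) = - c a v.
Proof.
move=> ha; rewrite /sr cB // addBMz; last exact: cB.
by rewrite caa // -mulrzr intz mulr_natl mulr2n opprD addrA subrr sub0r.
Qed.

Lemma sr_inv a v : a \in Phi -> sr a (sr a v) = v.
Proof.
move=> ha; rewrite {1}/sr c_sr // mulrNz.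
by rewrite /sr opprK subrK.
Qed.

Lemma perm_sr a : a \in Phi -> perm_eq (map (sr a) Phi) Phi.
Proof.
move=> ha; have inj : injective (sr a) by apply: (can_inj (g := sr a)) => v; rewrite sr_inv.
have u1 : uniq (map (sr a) Phi) by rewrite map_inj_uniq // uPhi.
have sub : {subset map (sr a) Phi <= Phi}.
  by move=> v /mapP [b hb ->]; apply: reflP.
apply: uniq_perm => //; first exact: uPhi.
have [|_ e] := uniq_min_size u1 sub; first by rewrite size_map.
move=> x; exact: e.
Qed.

Definition Nn a : rat := \sum_(b <- Phi) ((c a b)%:~R) ^+ 2.

Lemma Nn_gt0 a : a \in Phi -> 0 < Nn a.
Proof.
move=> ha; rewrite /Nn (bigD1_seq a) //=; last exact: uPhi.
rewrite caa //; apply: ltr_pwDl; first by [].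
by apply: sumr_ge0 => i _; apply: sqr_ge0.
Qed.

Lemma key (u : V -> rat) (hu : forall x y, u (x - y) = u x - u y) a :
  a \in Phi -> u a * Nn a = (\sum_(b <- Phi) u b * (c a b)%:~R) *+ 2.
Proof.
move=> ha; set S := \sum_(b <- Phi) _.
have : S = - S + u a * Nn a.
  rewrite {1}/S -(perm_big _ (perm_sr ha)) big_map /S /Nn mulr_sumr -sumrN -big_split /=.
  apply: eq_bigr => b _; rewrite c_sr // /sr hu (addBMz hu) rmorphN /=.
  by rewrite -mulrzr; ring.
by move=> h; rewrite mulr2n {1}h; ring.
Qed.


Lemma nondeg y : (forall b, b \in Phi -> c b y = 0) -> y = 0.
Proof.
move=> hy.
have [k [k0 [e he]]] := hss (hfull y).
pose W := fun v : V => \sum_(a <- Phi) ((e a)%:~R * 2 / Nn a) * (c a v)%:~R : rat.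
have hW : forall x z, W (x - z) = W x - W z.
  move=> x z; rewrite /W -sumrB big_seq [RHS]big_seq; apply: eq_bigr => a ha.
  by rewrite cB // rmorphB /= mulrBr.
have claim : forall u : V -> rat, (forall x z, u (x - z) = u x - u z) ->
    u y *+ k = \sum_(b <- Phi) u b * W b.
  move=> u hu.
  transitivity (u (y *+ k)); first by rewrite (addBMz hu y k).
  rewrite he (addBsum _ _ hu) /W.
  under [RHS]eq_bigr do rewrite mulr_sumr.
  rewrite exchange_big /= big_seq [RHS]big_seq; apply: eq_bigr => a ha.
  have hk := key hu ha.
  have hN : Nn a != 0 by rewrite gt_eqF // Nn_gt0.
  rewrite (addBMz hu) -mulrzr.
  transitivity ((e a)%:~R * 2 / Nn a * \sum_(b <- Phi) u b * (c a b)%:~R).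
    have -> : (e a)%:~R * 2 / Nn a * \sum_(b <- Phi) u b * (c a b)%:~R =
       (e a)%:~R / Nn a * ((\sum_(b <- Phi) u b * (c a b)%:~R) *+ 2).
      by rewrite mulr2n; ring.
    by rewrite -hk; field.
  by rewrite mulr_sumr; apply: eq_bigr => b _; ring.
have hWy : W y = 0 by rewrite /W big_seq big1 // => a ha; rewrite hy // mulr0.
have h2 := claim W hW; rewrite hWy mul0rn in h2.
have hWb : forall b, b \in Phi -> W b = 0.
  move=> b hb; move: h2 => /esym/eqP; rewrite psumr_eq0.
    by move=> /allP /(_ b hb) /=; rewrite mulf_eq0 orbb => /eqP.
  by move=> i _; rewrite -expr2 sqr_ge0.
apply/rowP => j; rewrite mxE.
have hu : forall x z : V, ((x - z) 0 j)%:~R = (x 0 j)%:~R - (z 0 j)%:~R :> rat.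
  by move=> x z; rewrite !mxE rmorphB.
have := claim _ hu.
rewrite big_seq big1 => [| b hb]; last by rewrite hWb // mulr0.
by move=> /eqP; rewrite mulrn_eq0 gt_eqF //= intr_eq0 => /eqP.
Qed.
End Hard.
End LibM.
Import LibM.
Import Order.TTheory Num.Theory.

Lemma tfree (m : nat) (v : 'rV[int]_m) (k : nat) : (0 < k)%N -> v *+ k = 0 -> v = 0.
Proof.
move=> k0 /rowP h; apply/rowP => j; have := h j; rewrite [RHS]mxE.
have hf : forall x y : 'rV[int]_m, (fun w : 'rV[int]_m => w 0 j) (x - y) = x 0 j - y 0 j.
  by move=> x y; rewrite !mxE.
have := addBMz hf v k => /= -> /eqP.
by rewrite mulrn_eq0 gt_eqF //= => /eqP; rewrite mxE.
Qed.

Lemma fstB (U W : zmodType) (x y : U * W) : (x - y).1 = x.1 - y.1. Proof. by []. Qed.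
Lemma sndB (U W : zmodType) (x y : U * W) : (x - y).2 = x.2 - y.2. Proof. by []. Qed.
Lemma pairB (U W : zmodType) (a c : U) (b d : W) : (a, b) - (c, d) = (a - c, b - d).
Proof. by []. Qed.
Lemma fstMz (U W : zmodType) (u : U * W) k : (u *~ k).1 = u.1 *~ k.
Proof. exact: (addBMz (f := fst) (@fstB U W)). Qed.
Lemma sndMz (U W : zmodType) (u : U * W) k : (u *~ k).2 = u.2 *~ k.
Proof. exact: (addBMz (f := snd) (@sndB U W)). Qed.
Lemma fstMn (U W : zmodType) (u : U * W) k : (u *+ k).1 = u.1 *+ k.
Proof. exact: (addBMz (f := fst) (@fstB U W) u k). Qed.
Lemma sndMn (U W : zmodType) (u : U * W) k : (u *+ k).2 = u.2 *+ k.
Proof. exact: (addBMz (f := snd) (@sndB U W) u k). Qed.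
Lemma fstsum (U W : zmodType) (I : Type) (s : seq I) (F : I -> U * W) :
  (\sum_(i <- s) F i).1 = \sum_(i <- s) (F i).1.
Proof. exact: (addBsum (f := fst) _ _ (@fstB U W)). Qed.
Lemma sndsum (U W : zmodType) (I : Type) (s : seq I) (F : I -> U * W) :
  (\sum_(i <- s) F i).2 = \sum_(i <- s) (F i).2.
Proof. exact: (addBsum (f := snd) _ _ (@sndB U W)). Qed.
Lemma addBMn {U W : zmodType} {f : U -> W} :
  (forall x y, f (x - y) = f x - f y) -> forall x k, f (x *+ k) = f x *+ k.
Proof. by move=> h x k; exact: (addBMz h x k). Qed.
Lemma pairE (U W : zmodType) (u v : U * W) : u.1 = v.1 -> u.2 = v.2 -> u = v.
Proof. by case: u; case: v => /= ? ? ? ? -> ->. Qed.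

Theorem mainTheorem8 (p : nat) (hp : p = 0%N \/ prime p)
  (n1 n2 m1 m2 : nat)
  (R1 : rdatum 'rV[int]_n1) (R2 : rdatum 'rV[int]_n2)
  (T1 : rdatum 'rV[int]_m1) (T2 : rdatum 'rV[int]_m2)
  (A1 A2 : finZmodType)
  (h1 : 'rV[int]_n1 -> A1) (h2 : 'rV[int]_n2 -> A2)
  (f1 : 'rV[int]_m1 -> A1) (f2 : 'rV[int]_m2 -> A2)
  (hR1 : is_root_datum R1 /\ full_lattice R1 /\ reduced_rd R1 /\ semisimple_rd R1)
  (hR2 : is_root_datum R2 /\ full_lattice R2 /\ reduced_rd R2 /\ semisimple_rd R2)
  (hT1 : is_root_datum T1 /\ full_lattice T1 /\ torus_rd T1)
  (hT2 : is_root_datum T2 /\ full_lattice T2 /\ torus_rd T2)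
  (hh1 : (forall x y, h1 (x + y) = h1 x + h1 y) /\ (forall a, exists x, h1 x = a)
         /\ (forall a, a \in rd_roots R1 -> h1 a = 0))
  (hh2 : (forall x y, h2 (x + y) = h2 x + h2 y) /\ (forall a, exists x, h2 x = a)
         /\ (forall a, a \in rd_roots R2 -> h2 a = 0))
  (hf1 : (forall x y, f1 (x + y) = f1 x + f1 y) /\ (forall a, exists t, f1 t = a))
  (hf2 : (forall x y, f2 (x + y) = f2 x + f2 y) /\ (forall a, exists t, f2 t = a))
  (z : ('rV[int]_n1 * 'rV[int]_m1)%type -> ('rV[int]_n2 * 'rV[int]_m2)%type)
  (zq : ('rV[int]_n2 * 'rV[int]_m2)%type -> nat)
  (ztau : ('rV[int]_n2 * 'rV[int]_m2)%type -> ('rV[int]_n1 * 'rV[int]_m1)%type)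
  (hz : p_morphism p (cprod R1 T1 h1 f1) (cprod R2 T2 h2 f2) z zq ztau) :
  exists (g1 : 'rV[int]_n1 -> 'rV[int]_n2) (q1 : 'rV[int]_n2 -> nat)
         (tau1 : 'rV[int]_n2 -> 'rV[int]_n1)
         (g2 : 'rV[int]_m1 -> 'rV[int]_m2) (q2 : 'rV[int]_m2 -> nat)
         (tau2 : 'rV[int]_m2 -> 'rV[int]_m1)
         (z3 : A1 -> A2),
    [/\ p_morphism p R1 R2 g1 q1 tau1,
        p_morphism p T1 T2 g2 q2 tau2,
        (forall a b, z3 (a + b) = z3 a + z3 b),
        (forall b, b \in rd_lat (cprod R1 T1 h1 f1) -> z b = (g1 b.1, g2 b.2)) &
        [/\ (forall x, z3 (h1 x) = h2 (g1 x)),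
            (forall t, z3 (f1 t) = f2 (g2 t)),
            (forall x, h1 x = 0 -> h2 (g1 x) = 0) &
            (p_iso p (cprod R1 T1 h1 f1) (cprod R2 T2 h2 f2) z zq ztau ->
               [/\ p_iso p R1 R2 g1 q1 tau1, p_iso p T1 T2 g2 q2 tau2,
                   bijective z3 &
                   (forall y, h2 y = 0 <-> exists x, h1 x = 0 /\ g1 x = y)])]].
Proof.
case: hR1 => rd1 [full1 [_ ss1]]; case: hR2 => rd2 [full2 [_ ss2]].
case: hT1 => _ [fullT1 tor1]; case: hT2 => _ [fullT2 tor2].
case: hh1 => h1D [h1S h1r]; case: hh2 => h2D [h2S h2r].
case: hf1 => f1D f1S; case: hf2 => f2D f2S.
have hz0 := hz.
case: hz => zB [zL [zqP [ztauP [ztauI [ztauS [zroot zcor]]]]]].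
have h1B := sub_of_add h1D; have h2B := sub_of_add h2D.
have f1B := sub_of_add f1D; have f2B := sub_of_add f2D.
set B1 := rd_lat (cprod R1 T1 h1 f1).
set B2 := rd_lat (cprod R2 T2 h2 f2).
have memB1 : forall b, (b \in B1) = (h1 b.1 == f1 b.2).
  by move=> b; rewrite /B1 /= inE full1 fullT1.
have memB2 : forall b, (b \in B2) = (h2 b.1 == f2 b.2).
  by move=> b; rewrite /B2 /= inE full2 fullT2.
have B10 : (0 : 'rV[int]_n1 * 'rV[int]_m1) \in B1 by rewrite memB1 /= (addB0 h1B) (addB0 f1B).
have B1B : forall x y, x \in B1 -> y \in B1 -> x - y \in B1.
  move=> x y; rewrite !memB1 => /eqP hx /eqP hy; rewrite fstB sndB h1B f1B hx hy //.
have zB' : forall x y, x \in B1 -> y \in B1 -> z (x - y) = z x - z y by move=> x y; exact: zB.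
have rootP1 : forall b, b \in rd_roots (cprod R1 T1 h1 f1) -> b.2 = 0 /\ b.1 \in rd_roots R1.
  by move=> b /mapP [a ha ->].
have rootP2 : forall b, b \in rd_roots (cprod R2 T2 h2 f2) -> b.2 = 0 /\ b.1 \in rd_roots R2.
  by move=> b /mapP [a ha ->].
have root1 : forall a, a \in rd_roots R1 -> (a, 0) \in rd_roots (cprod R1 T1 h1 f1).
  by move=> a ha; apply: (map_f (fun a => (a, 0)) ha).
have root2 : forall a, a \in rd_roots R2 -> (a, 0) \in rd_roots (cprod R2 T2 h2 f2).
  by move=> a ha; apply: (map_f (fun a => (a, 0)) ha).
have rootB1 : forall a, a \in rd_roots R1 -> (a, 0) \in B1.
  by move=> a ha; rewrite memB1 /= h1r // (addB0 f1B).
have claim1 : forall s, f1 s = 0 -> (z (0, s)).1 = 0.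
  move=> s hs; apply: (nondeg rd2 full2 ss2) => b hb.
  have hin : ((0 : 'rV[int]_n1), s) \in B1 by rewrite memB1 /= hs (addB0 h1B).
  have := zcor _ (root2 _ hb) _ hin => /= ->.
  have [_ ht] := rootP1 _ (ztauP _ (root2 _ hb)).
  by rewrite (addB0 (cB rd1 full1 ht)) mul0rn.
have zroot2 : forall a, a \in rd_roots R1 -> (z (a, 0)).2 = 0.
  move=> a ha; have [a' ha' eq] := ztauS _ (root1 _ ha).
  by rewrite -eq zroot // sndMn (rootP2 _ ha').1 mul0rn.
have claim2 : forall y, h1 y = 0 -> (z (y, 0)).2 = 0.
  move=> y hy; have [k [k0 [e he]]] := ss1 y (full1 y).
  apply: (@tfree m2 _ k k0).
  have hyB : (y, 0) \in B1 by rewrite memB1 /= hy (addB0 f1B).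
  have e1 : (y, 0 : 'rV[int]_m1) *+ k = \sum_(a <- rd_roots R1) (a, 0 : 'rV[int]_m1) *~ e a.
    apply: pairE.
      by rewrite fstMn fstsum /= he; apply: eq_bigr => a _; rewrite fstMz.
    by rewrite sndMn sndsum /= mul0rn big1 // => a _; rewrite sndMz mul0rz.
  have := congr1 (fun b => (z b).2) e1 => /=.
  rewrite (fMn B10 B1B zB' _ hyB) sndMn => ->.
  rewrite (fsum B10 B1B zB'); last by move=> a ha; apply: BMz => //; exact: rootB1.
  rewrite sndsum big_seq big1 // => a ha.
  by rewrite (fMz B10 B1B zB' _ (rootB1 _ ha)) sndMz zroot2 // mul0rz.
have ex_t : forall x, exists t, f1 t == h1 x.
  by move=> x; have [t ht] := f1S (h1 x); exists t; apply/eqP.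
have ex_x : forall t, exists x, h1 x == f1 t.
  by move=> t; have [x hx] := h1S (f1 t); exists x; apply/eqP.
pose t_of x := xchoose (ex_t x).
pose x_of t := xchoose (ex_x t).
have t_ofP : forall x, f1 (t_of x) = h1 x by move=> x; apply/eqP; exact: (xchooseP (ex_t x)).
have x_ofP : forall t, h1 (x_of t) = f1 t by move=> t; apply/eqP; exact: (xchooseP (ex_x t)).
pose g1 x := (z (x, t_of x)).1.
pose g2 t := (z (x_of t, t)).2.
have decomp : forall b, b \in B1 -> z b = (g1 b.1, g2 b.2).
  case=> x t; rewrite memB1 /= => /eqP hxt; apply: pairE => /=.
    have hb1 : (x, t) \in B1 by rewrite memB1 /= hxt.
    have hb2 : (x, t_of x) \in B1 by rewrite memB1 /= t_ofP.
    have := zB' _ _ hb1 hb2; rewrite pairB subrr => /(congr1 fst).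
    rewrite claim1; last by rewrite f1B t_ofP hxt subrr.
    by rewrite fstB => /esym/eqP; rewrite subr_eq0 => /eqP.
  have hb1 : (x, t) \in B1 by rewrite memB1 /= hxt.
  have hb2 : (x_of t, t) \in B1 by rewrite memB1 /= x_ofP.
  have := zB' _ _ hb1 hb2; rewrite pairB subrr => /(congr1 snd).
  rewrite claim2; last by rewrite h1B hxt x_ofP subrr.
  by rewrite sndB => /esym/eqP; rewrite subr_eq0 => /eqP.
have inB1 : forall x t, h1 x = f1 t -> (x, t) \in B1 by move=> x t h; rewrite memB1 /= h.
have g0 : g1 0 = 0 /\ g2 0 = 0.
  have := decomp _ B10; rewrite (f0 B10 zB') => h.
  by split; [have := congr1 fst h | have := congr1 snd h] => /= <-.
have g1B : forall x y, g1 (x - y) = g1 x - g1 y.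
  move=> x y; have hx := inB1 _ _ (esym (t_ofP x)); have hy := inB1 _ _ (esym (t_ofP y)).
  have := zB' _ _ hx hy; rewrite (decomp _ (B1B _ _ hx hy)) (decomp _ hx) (decomp _ hy).
  by move=> /(congr1 fst) /=.
have g2B : forall x y, g2 (x - y) = g2 x - g2 y.
  move=> x y; have hx := inB1 _ _ (x_ofP x); have hy := inB1 _ _ (x_ofP y).
  have := zB' _ _ hx hy; rewrite (decomp _ (B1B _ _ hx hy)) (decomp _ hx) (decomp _ hy).
  by move=> /(congr1 snd) /=.
have zL' : forall b, b \in B1 -> h2 (g1 b.1) = f2 (g2 b.2).
  by move=> b hb; have := zL _ hb; rewrite (decomp _ hb) memB2 /= => /eqP.
have hker : forall x, h1 x = 0 -> h2 (g1 x) = 0.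
  move=> x hx; have := zL' (x, 0) (inB1 _ _ _); rewrite /= g0.2 (addB0 f2B); apply.
  by rewrite hx (addB0 f1B).
have ex_h : forall a, exists x, h1 x == a.
  by move=> a; have [x hx] := h1S a; exists x; apply/eqP.
pose xa a := xchoose (ex_h a).
have xaP : forall a, h1 (xa a) = a by move=> a; apply/eqP; exact: (xchooseP (ex_h a)).
pose z3 a := h2 (g1 (xa a)).
have z3h : forall x, z3 (h1 x) = h2 (g1 x).
  move=> x; have := hker (xa (h1 x) - x); rewrite h1B xaP subrr g1B h2B => /(_ erefl) /eqP.
  by rewrite subr_eq0 => /eqP.
have z3f : forall t, z3 (f1 t) = f2 (g2 t).
  by move=> t; rewrite -x_ofP z3h; apply: (zL' (x_of t, t)); apply: inB1.
have z3D : forall a b, z3 (a + b) = z3 a + z3 b.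
  move=> a b; have [x <-] := h1S a; have [y <-] := h1S b.
  by rewrite -h1D !z3h (addBD g1B) h2D.
have tauP : forall a, a \in rd_roots R2 ->
    ztau (a, 0) = ((ztau (a, 0)).1, 0) /\ (ztau (a, 0)).1 \in rd_roots R1.
  move=> a ha; have [h2' h1'] := rootP1 _ (ztauP _ (root2 _ ha)); split => //.
  exact: pairE.
have pm1 : p_morphism p R1 R2 g1 (fun b => zq (b, 0)) (fun b => (ztau (b, 0)).1).
  split; first by move=> x y _ _; exact: g1B.
  split; first by move=> x _; apply: full2.
  split; first by move=> a ha; apply: zqP; apply: root2.
  split; first by move=> a ha; exact: (tauP a ha).2.
  split.
    move=> a b ha hb e; apply: (congr1 fst (ztauI _ _ (root2 _ ha) (root2 _ hb) _)).
    by rewrite (tauP a ha).1 (tauP b hb).1 e.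
  split.
    move=> b hb; have [a' ha' e] := ztauS _ (root1 _ hb).
    have [ha2 ha1] := rootP2 _ ha'; exists a'.1 => //.
    have ea : a' = (a'.1, 0) by apply: pairE.
    by rewrite -ea e.
  split.
    move=> a ha; have [e1 e2] := tauP a ha; have hb := rootB1 _ e2.
    have h := zroot _ (root2 _ ha); rewrite e1 (decomp _ hb) in h.
    by have := congr1 fst h; rewrite fstMn.
  move=> a ha x _; exact: (zcor _ (root2 _ ha) _ (inB1 _ _ (esym (t_ofP x)))).
have pm2 : p_morphism p T1 T2 g2 (fun _ => 1%N) (fun _ => 0).
  rewrite /p_morphism tor1 tor2.
  split; first by move=> x y _ _; exact: g2B.
  split; first by move=> x _; apply: fullT2.
  by do !split => //; move=> ?; rewrite in_nil.
exists g1, (fun b => zq (b, 0)), (fun b => (ztau (b, 0)).1), g2, (fun _ => 1%N), (fun _ => 0), z3.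
split => //; split => //.
move=> [_ [zinj [zsurj zq1]]].
have zs : forall y t, h2 y = f2 t -> exists2 b, b \in B1 & g1 b.1 = y /\ g2 b.2 = t.
  move=> y t hyt; have hm : (y, t) \in B2 by rewrite memB2 /= hyt.
  have [b hb e] := zsurj (y, t) hm.
  exists b => //; move: e; rewrite (decomp _ hb) => e.
  by split; [exact: (congr1 fst e) | exact: (congr1 snd e)].
have g1inj0 : forall d, g1 d = 0 -> d = 0.
  move=> d hd; have [k [k0 [e he]]] := ss1 d (full1 d).
  have hdB : (d *+ k, 0) \in B1.
    apply: inB1; rewrite he (addBsum _ _ h1B) (addB0 f1B) big_seq big1 // => a ha.
    by rewrite (addBMz h1B) h1r // mul0rz.
  have := decomp _ hdB; rewrite /= g0.2 (addBMn g1B) hd mul0rn => e0.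
  have : z (d *+ k, 0) = z 0 by rewrite e0 (f0 B10 zB').
  move=> /(zinj _ _ hdB B10) /(congr1 fst) /= hk.
  exact: (@tfree n1 d k k0).
have g1inj : forall x y, g1 x = g1 y -> x = y.
  move=> x y e; apply/eqP; rewrite -subr_eq0; apply/eqP; apply: g1inj0.
  by rewrite g1B e subrr.
have g2inj0 : forall s, g2 s = 0 -> s = 0.
  move=> s hs; have hb := inB1 _ _ (x_ofP s).
  have h0 : h2 (g1 (x_of s)) = 0 by rewrite (zL' _ hb) /= hs (addB0 f2B).
  have [k [k0 [e he]]] := ss2 _ (full2 (g1 (x_of s))).
  pose c := \sum_(b <- rd_roots R2) ztau (b, 0) *~ e b.
  have tB : forall b, b \in rd_roots R2 -> ztau (b, 0) \in B1.
    by move=> b hb'; rewrite (tauP b hb').1; apply: rootB1; exact: (tauP b hb').2.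
  have cB1 : c \in B1 by apply: Bsum => // b hb'; apply: BMz => //; exact: tB.
  have hkB : (x_of s, s) *+ k \in B1 by apply: BMn.
  have ez : z ((x_of s, s) *+ k) = z c.
    rewrite (fMn B10 B1B zB' _ hb) (fsum B10 B1B zB'); last by move=> b hb'; apply: BMz => //; exact: tB.
    rewrite (decomp _ hb) /= hs; apply: pairE.
      rewrite fstMn /= he fstsum; apply: eq_big_seq => b hb'.
      by rewrite (fMz B10 B1B zB' _ (tB _ hb')) zroot ?root2 // zq1 ?root2 // fstMz.
    rewrite sndMn /= mul0rn sndsum big_seq big1 // => b hb'.
    by rewrite (fMz B10 B1B zB' _ (tB _ hb')) zroot ?root2 // zq1 ?root2 // sndMz mul0rz.
  have := zinj _ _ hkB cB1 ez => /(congr1 snd); rewrite sndMn /= sndsum big_seq big1.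
    by apply: (@tfree m1 s k k0).
  by move=> b hb'; rewrite sndMz (tauP b hb').1 mul0rz.
have g2inj : forall x y, g2 x = g2 y -> x = y.
  move=> x y e; apply/eqP; rewrite -subr_eq0; apply/eqP; apply: g2inj0.
  by rewrite g2B e subrr.
have z3inj0 : forall a, z3 a = 0 -> a = 0.
  move=> a; have [x <-] := h1S a; rewrite z3h => hx.
  have hx0 : h2 (g1 x) = f2 0 by rewrite hx (addB0 f2B).
  have [b hb [e1 e2]] := zs (g1 x) 0 hx0.
  have ex := g1inj _ _ e1; move: e2; rewrite -g0.2 => /g2inj e2.
  by move: hb; rewrite memB1 ex e2 (addB0 f1B) => /eqP.
have z3B := sub_of_add z3D.
have z3inj : injective z3.
  move=> a b e; apply/eqP; rewrite -subr_eq0; apply/eqP; apply: z3inj0.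
  by rewrite z3B e subrr.
have z3surj : forall b, exists a, z3 a == b.
  move=> b; have [y <-] := h2S b; have [t ht] := f2S (h2 y).
  have [b' hb' [e1 _]] := zs y t (esym ht).
  by exists (h1 b'.1); rewrite z3h e1.
have g1surj : forall y, exists x, g1 x = y.
  move=> y; have [t ht] := f2S (h2 y).
  by have [b' hb' [e1 _]] := zs y t (esym ht); exists b'.1.
have g2surj : forall t, exists x, g2 x = t.
  move=> t; have [y hy] := h2S (f2 t).
  by have [b' hb' [_ e2]] := zs y t hy; exists b'.2.
split.
- split => //; split; first by move=> x y _ _; exact: g1inj.
  split; first by move=> y _; have [x hx] := g1surj y; exists x => //; apply: full1.
  by move=> a ha; apply: zq1; apply: root2.
- split => //; split; first by move=> x y _ _; exact: g2inj.
  split; first by move=> y _; have [x hx] := g2surj y; exists x => //; apply: fullT1.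
  by rewrite tor2.
- exists (fun b => xchoose (z3surj b)).
    by move=> a; apply: z3inj; apply/eqP; exact: (xchooseP (z3surj (z3 a))).
  by move=> b; apply/eqP; exact: (xchooseP (z3surj b)).
move=> y; split.
  move=> hy; have [x hx] := g1surj y; exists x; split => //.
  by apply: z3inj0; rewrite z3h hx.
by case=> x [hx <-]; apply: hker.
Qed.
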